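(* Let $\kappa$ be an infinite cardinal. The set $B=\{(A,\,A\cap C,\,C) : A,C\in\mathcal{F}(\kappa),\ A\sim C\}$ is a maximal Boolean sublattice of the lattice $S$; that is, $B$ is a bounded Boolean sublattice of $S$ and no complemented bounded sublattice $C$ of $S$ with $B\subsetneq C$ is Boolean.
   Context: $\mathcal{F}(\kappa)$ is the Boolean lattice of subsets $X\subseteq\kappa$ that are finite or cofinite (i.e. $\kappa\setminus X$ finite). For $A,C\in\mathcal{F}(\kappa)$, write $A\sim C$ if either both $A$ and $C$ are finite or both $\kappa\setminus A$ and $\kappa\setminus C$ are finite. For $(A,B,C)$ set $\mu(A,B,C)=(A\cap B)\cup(A\cap C)\cup(B\cap C)$. A triple $(A,B,C)$ is balanced if $A\cap B=A\cap C=B\cap C$. The lattice $S$ is the set of balanced triples $(A,B,C)\in\mathcal{F}(\kappa)^3$ such that $C\setminus\mu(A,B,C)$ is finite, ordered componentwise; its meet is componentwise intersection and its join is $(A,B,C)\vee(A',B',C')=(U_1\cup m,U_2\cup m,U_3\cup m)$ where $(U_1,U_2,U_3)=(A\cup A',B\cup B',C\cup C')$ and $m=\mu(U_1,U_2,U_3)$. Its bounds are $(\emptyset,\emptyset,\emptyset)$ and $(\kappa,\kappa,\kappa)$. *)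

(* Defs.v *)
From HB Require Import structures.
From mathcomp Require Import all_boot.
From mathcomp Require Import boolp classical_sets cardinality.
Unset Strict Implicit. Unset Printing Implicit Defensive.
Local Open Scope classical_set_scope.

Section FiniteCofinite.
Variable T : Type. (* the cardinal kappa, as a type *)

Definition inF (X : set T) : Prop := finite_set X \/ finite_set (~` X).

Definition simF (A C : set T) : Prop :=
  (finite_set A /\ finite_set C) \/ (finite_set (~` A) /\ finite_set (~` C)).

Definition mu (A B C : set T) : set T := (A `&` B) `|` (A `&` C) `|` (B `&` C).

Definition triple := (set T * set T * set T)%type.
Definition t1 (x : triple) := x.1.1.
Definition t2 (x : triple) := x.1.2.
Definition t3 (x : triple) := x.2.

Definition balanced (x : triple) : Prop :=
  t1 x `&` t2 x = t1 x `&` t3 x /\ t1 x `&` t3 x = t2 x `&` t3 x.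

Definition inS (x : triple) : Prop :=
  [/\ inF (t1 x), inF (t2 x), inF (t3 x), balanced x &
      finite_set (t3 x `\` mu (t1 x) (t2 x) (t3 x))].

Definition meetS (x y : triple) : triple :=
  (t1 x `&` t1 y, t2 x `&` t2 y, t3 x `&` t3 y).

Definition joinS (x y : triple) : triple :=
  let U1 := t1 x `|` t1 y in
  let U2 := t2 x `|` t2 y in
  let U3 := t3 x `|` t3 y in
  let m := mu U1 U2 U3 in
  (U1 `|` m, U2 `|` m, U3 `|` m).

Definition botS : triple := (set0, set0, set0).
Definition topS : triple := (setT, setT, setT).

Definition bounded_sublattice (L : set triple) : Prop :=
  [/\ L `<=` inS, L botS, L topS,
      (forall x y, L x -> L y -> L (meetS x y)) &
      (forall x y, L x -> L y -> L (joinS x y))].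

Definition complemented_in (L : set triple) : Prop :=
  forall x, L x -> exists2 y, L y & meetS x y = botS /\ joinS x y = topS.

Definition distributive_in (L : set triple) : Prop :=
  forall x y z, L x -> L y -> L z ->
    meetS x (joinS y z) = joinS (meetS x y) (meetS x z).

Definition boolean_in (L : set triple) : Prop :=
  distributive_in L /\ complemented_in L.

Definition Bset : set triple :=
  [set x | exists A C, [/\ inF A, inF C, simF A C & x = (A, A `&` C, C)]].

End FiniteCofinite.

(* Main.v *)
Require Import Defs.
From mathcomp Require Import all_boot.
From mathcomp Require Import boolp classical_sets cardinality.
From Stdlib Require Import Classical.
Set Implicit Arguments.
Local Open Scope classical_set_scope.

Ltac unf := rewrite /meetS /joinS /mu /t1 /t2 /t3 /botS /topS /=.
Ltac unfs := rewrite /setI /setU /setC /set0 /setT /setD /set1 /mkset /=.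
Ltac seteq := apply: funext => ?; apply: propext; unfs; tauto.

Lemma eq_prop_iff (P Q : Prop) : P = Q -> (P <-> Q).
Proof. by move->. Qed.

Section Aux.
Variable T : Type.
Hypothesis Tinf : ~ finite_set [set: T].

Lemma cover3 (A B C : set T) : finite_set A -> finite_set B -> finite_set C ->
  (forall t, A t \/ B t \/ C t) -> False.
Proof.
move=> fA fB fC cov; apply: Tinf.
apply: (@sub_finite_set _ _ (A `|` B `|` C)).
  by move=> t _; case: (cov t) => [h|[h|h]]; [left;left|left;right|right].
by rewrite !finite_setU.
Qed.

Lemma inF_I (A C : set T) : inF T A -> inF T C -> inF T (A `&` C).
Proof.
move=> [fA|cA] [fC|cC]; first (by left; apply: finite_setIl);
  first (by left; apply: finite_setIl); first (by left; apply: finite_setIr).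
right; rewrite setCI finite_setU; done.
Qed.

Lemma inF_C (A : set T) : inF T A -> inF T (~` A).
Proof. by move=> [h|h]; [right; rewrite setCK|left]. Qed.

Lemma inF_U (A C : set T) : inF T A -> inF T C -> inF T (A `|` C).
Proof.
move=> hA hC; have := inF_C (inF_I (inF_C hA) (inF_C hC)).
by rewrite -setCU setCK.
Qed.

Lemma simF_I (A C A' C' : set T) : simF T A C -> simF T A' C' ->
  simF T (A `&` A') (C `&` C').
Proof.
move=> [[fA fC]|[cA cC]] [[fA' fC']|[cA' cC']].
- by left; split; apply: finite_setIl.
- by left; split; apply: finite_setIl.
- by left; split; apply: finite_setIr.
- by right; rewrite !setCI !finite_setU.
Qed.

Lemma simF_C (A C : set T) : simF T A C -> simF T (~` A) (~` C).
Proof. by move=> [[fA fC]|[cA cC]]; [right; rewrite !setCK|left]. Qed.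

Lemma simF_U (A C A' C' : set T) : simF T A C -> simF T A' C' ->
  simF T (A `|` A') (C `|` C').
Proof.
move=> h h'; have := simF_C (simF_I (simF_C h) (simF_C h')).
by rewrite -!setCU !setCK.
Qed.

End Aux.
Section Main.
Variable T : Type.
Hypothesis Tinf : ~ finite_set [set: T].

Lemma B_inS : Bset T `<=` inS T.
Proof.
move=> x [A [C [hA hC hs ->]]]; split => //; rewrite /t1/t2/t3 /=.
- exact: inF_I.
- by rewrite /balanced /t1 /t2 /t3 /=; split; seteq.
- case: hs => [[fA fC]|[cA cC]].
    by apply: (sub_finite_set _ fC) => t [].
  by apply: (sub_finite_set _ cA) => t; rewrite /mu; unfs; tauto.
Qed.

Lemma B_bot : Bset T (botS T).
Proof.
exists set0, set0; split; try by left; exact: finite_set0.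
  by left; split; exact: finite_set0.
by rewrite /botS setIid.
Qed.

Lemma B_top : Bset T (topS T).
Proof.
exists setT, setT; split; try by right; rewrite setCT; exact: finite_set0.
  by right; rewrite setCT; split; exact: finite_set0.
by rewrite /topS setIid.
Qed.

Lemma B_meet x y : Bset T x -> Bset T y -> Bset T (meetS T x y).
Proof.
move=> [A [C [hA hC hs ->]]] [A' [C' [hA' hC' hs' ->]]].
exists (A `&` A'), (C `&` C'); split; try exact: inF_I; first exact: simF_I.
unf; congr (_, _, _); seteq.
Qed.

Lemma B_join x y : Bset T x -> Bset T y -> Bset T (joinS T x y).
Proof.
move=> [A [C [hA hC hs ->]]] [A' [C' [hA' hC' hs' ->]]].
exists (A `|` A'), (C `|` C'); split; try exact: inF_U; first exact: simF_U.
unf; congr (_, _, _); seteq.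
Qed.

Lemma B_dist : distributive_in T (Bset T).
Proof.
move=> x y z [A [C [_ _ _ ->]]] [A' [C' [_ _ _ ->]]] [A'' [C'' [_ _ _ ->]]].
unf; congr (_, _, _); seteq.
Qed.

Lemma B_compl : complemented_in T (Bset T).
Proof.
move=> x [A [C [hA hC hs ->]]].
exists (~` A, ~` A `&` ~` C, ~` C).
  exists (~` A), (~` C); split; try exact: inF_C; try exact: simF_C; done.
unf; split; congr (_, _, _); apply: funext => t; apply: propext; unfs;
  have := classic (A t); have := classic (C t); tauto.
Qed.

End Main.
Section Main2.
Variable T : Type.
Hypothesis Tinf : ~ finite_set [set: T].

Lemma key (L : set (triple T)) : Bset T `<=` L -> distributive_in T L ->
  forall P Q R, L (P, Q, R) -> Q `<=` P.
Proof.
move=> BL dL P Q R Ly t Qt; apply: NNPP => nPt.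
have Lb : L ([set t], [set t] `&` set0, set0).
  apply: BL; exists [set t], set0; split => //.
  - by left; exact: finite_set1.
  - by left; exact: finite_set0.
  - by left; split; [exact: finite_set1|exact: finite_set0].
have Lb' : L (~` [set t], ~` [set t] `&` setT, setT).
  apply: BL; exists (~` [set t]), setT; split => //.
  - by right; rewrite setCK; exact: finite_set1.
  - by right; rewrite setCT; exact: finite_set0.
  - by right; rewrite setCK setCT; split; [exact: finite_set1|exact: finite_set0].
move: (dL _ _ _ Ly Lb Lb') => /(congr1 (fun w => w.1.2 t)).
unf; unfs => E; move: (eq_prop_iff E) => [h _]; lapply h; last first.
  by split => //; right; left; right; split; [left|right].
move=> H; repeat match goal with
  | H : _ /\ _ |- _ => destruct H
  | H : _ \/ _ |- _ => destruct H end;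
  solve [ contradiction | match goal with H : t <> t |- _ => exact: (H erefl) end ].
Qed.

End Main2.
Theorem proposition5p6 (T : Type) (Tinf : ~ finite_set [set: T]) :
  (bounded_sublattice T (Bset T) /\ boolean_in T (Bset T)) /\
  (forall L : set (triple T),
      bounded_sublattice T L -> complemented_in T L ->
      Bset T `<=` L -> Bset T <> L ->
      ~ boolean_in T L).
Proof.
split.
  split; split.
  - exact: B_inS.
  - exact: B_bot.
  - exact: B_top.
  - exact: B_meet.
  - exact: B_join.
  - exact: B_dist.
  - exact: B_compl.
move=> L [LS Lbot Ltop Lmeet Ljoin] Lc BL nBL [dL _].
have [x [Lx nBx]] : exists x, L x /\ ~ Bset T x.
  apply: NNPP => H; apply: nBL; apply/seteqP; split => // y Ly.
  apply: NNPP => nBy; apply: H; by exists y.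
case: x Lx nBx => [[X Y] Z] Lx nBx.
have YX := @key _ L BL dL _ _ _ Lx.
have [fX fY fZ [hb1 hb2] fm] := LS _ Lx.
rewrite /t1 /t2 /t3 /= in fX fY fZ hb1 hb2 fm.
have eY : Y = X `&` Z.
  apply/seteqP; split => t.
    move=> Yt; have : (X `&` Y) t by split => //; apply: YX.
    by rewrite hb1.
  by move=> Xt; have : (X `&` Z) t by []; rewrite -hb1 => -[].
have nsim : ~ simF T X Z by move=> hs; apply: nBx; exists X, Z; rewrite -eY.
case: fX => fX; case: fZ => fZ.
- by apply: nsim; left.
- apply: (cover3 Tinf fm fZ fX) => t.
  have := YX t; have := classic (Z t); have := classic (X t).
  rewrite /mu; unfs; tauto.
- have [y Ly [hm hj]] := Lc _ Lx.
  case: y Ly hm hj => [[P Q] R] Ly hm hj.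
  have QP := @key _ L BL dL _ _ _ Ly.
  have [_ _ _ [hb1' _] fmy] := LS _ Ly.
  rewrite /t1 /t2 /t3 /= in hb1' fmy.
  have QR : Q `<=` R.
    move=> t Qt; have : (P `&` Q) t by split => //; apply: QP.
    by rewrite hb1' => -[].
  have YZ : Y `<=` Z by rewrite eY => t [].
  have hm1 t : ~ (X t /\ P t).
    move: hm => /(congr1 (fun w => w.1.1 t)); unf; unfs => E.
    by rewrite E.
  have hj3 t : ~ Z t -> R t.
    move: hj => /(congr1 (fun w => w.2 t)); unf; unfs => E.
    move: (eq_prop_iff E) => [_ h]; have := h I.
    have := YZ t; have := QR t; tauto.
  apply: (cover3 Tinf fmy fX fZ) => t.
  have := hj3 t; have := hm1 t; have := QP t.
  have := classic (Z t); have := classic (X t).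
  rewrite /mu; unfs; tauto.
- by apply: nsim; right.
Qed.
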